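(* Let $n\ge2$, $\kappa>0$, and let $\tilde\theta:\mathbb R\to[0,\infty)$ be locally Lipschitz and nondecreasing with $\tilde\theta(s)=0$ for $s\le 0$ and $\tilde\theta(s)>0$ for $s>0$; set $\theta(a,b)=\tilde\theta(\min(a,b))$. Let $\rho:[0,\infty)\to\mathbb R^n$ be the solution of $$\frac{d\rho_j}{dt}=\kappa\sum_{k=1}^n\theta(\rho_j,\rho_k)(\rho_j-\rho_k),\qquad j=1,\dots,n,$$ with $\rho(0)\in\mathcal P$. Let $\mathcal S_M=\{j\in\{1,\dots,n\}:\rho_j(0)=\max_{1\le k\le n}\rho_k(0)\}$ and $m=|\mathcal S_M|$. Then $$\lim_{t\to\infty}\rho_j(t)=\frac1m\ \ \forall j\in\mathcal S_M,\qquad \lim_{t\to\infty}\rho_k(t)=0\ \ \forall k\notin\mathcal S_M.$$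
   Context: $\mathcal P=\{\rho\in\mathbb R^n:\rho_i\ge0\ \forall i,\ \sum_{i=1}^n\rho_i=1\}$ denotes the probability simplex. *)

(* Defs.v *)
From HB Require Import structures.
From mathcomp Require Import all_boot all_order all_algebra.
From mathcomp Require Import all_classical all_reals all_analysis.
Set Implicit Arguments. Unset Strict Implicit. Unset Printing Implicit Defensive.
Import Order.TTheory GRing.Theory Num.Theory.
Import numFieldNormedType.Exports.
Local Open Scope ring_scope.

Definition locally_lipschitz (R : realType) (f : R -> R) : Prop :=
  forall a b : R, exists L : R, forall x y : R,
    a <= x <= b -> a <= y <= b -> `|f x - f y| <= L * `|x - y|.

Definition in_simplex (R : realType) (n : nat) (p : 'I_n -> R) : Prop :=
  (forall i, 0 <= p i) /\ \sum_(i < n) p i = 1.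

Definition theta (R : realType) (tht : R -> R) (a b : R) : R :=
  tht (Num.min a b).

Definition argmax_set (R : realType) (n : nat) (p : 'I_n -> R) : {set 'I_n} :=
  [set j | [forall k, p k <= p j]].

(* Main.v *)
Require Import Defs.
From HB Require Import structures.
From mathcomp Require Import all_boot all_order all_algebra.
From mathcomp Require Import all_classical all_reals all_analysis.
Import Order.TTheory GRing.Theory Num.Theory.
Import numFieldNormedType.Exports.
Local Open Scope classical_set_scope.
Local Open Scope ring_scope.
From mathcomp Require Import ring lra.
Section G.
Context {R : realType}.
Lemma expk_cont (k : R) : continuous (fun t : R => expR (k * t)).
Proof.
move=> t.
apply: (@continuous_comp _ _ _ (fun t => k * t) expR).
  apply: continuousM; [exact: cvg_cst| exact: cvg_id].
exact: continuous_expR.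
Qed.
Lemma hcont (f : R -> R) (A : set R) k : {within A, continuous f} ->
  {within A, continuous (fun t => f t * f t * expR (k * t))}.
Proof.
move=> cf x.
apply: (@continuousM R (subspace A) (fun t => f t * f t) (fun t => expR (k * t)) x).
  by have := (@continuousM R (subspace A) f f x (cf x) (cf x)).
have h := @continuous_subspaceT _ _ A _ (expk_cont k).
by apply: h.
Qed.
Lemma hderiv (f df : R -> R) (k x : R) : is_derive x 1 f (df x) ->
  is_derive x 1 (fun t => f t * f t * expR (k * t))
    ((2 * f x * df x + k * (f x * f x)) * expR (k * x)).
Proof.
move=> fd.
have l : is_derive x 1 (fun t => k * t) k.
  have := @is_deriveZ R R R id k x 1 1 (is_derive_id _ _).
  by move=> h; apply: is_derive_eq h _; rewrite /GRing.scale /= mulr1.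
have e : is_derive x 1 (fun t => expR (k * t)) (expR (k * x) * k).
  exact: (@is_derive1_comp R expR (fun t => k * t) x (expR (k * x)) k).
have f2 : is_derive x 1 (fun t => f t * f t) (2 * f x * df x).
  have := @is_deriveM R R f f x 1 (df x) (df x) fd fd.
  by move=> h; apply: is_derive_eq h _; rewrite /GRing.scale /=; ring.
have := @is_deriveM R R _ _ x 1 _ _ f2 e.
move=> h; apply: is_derive_eq h _; rewrite /GRing.scale /=; ring.
Qed.
Lemma fdf_bound (u v C : R) : `|v| <= C * `|u| ->
  - (C * (u * u)) <= u * v <= C * (u * u).
Proof.
move=> h.
have h1 : `|u * v| <= C * (u * u).
  have e : C * (u * u) = `|u| * (C * `|u|).
    by rewrite [RHS]mulrCA -normrM ger0_norm // -expr2 sqr_ge0.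
  by rewrite e normrM; apply: ler_wpM2l.
rewrite -ler_norml; exact: h1.
Qed.

Lemma gron (f df : R -> R) (a b C : R) : a <= b ->
  {within `[a,b], continuous f} ->
  (forall x, x \in `]a,b[ -> is_derive x 1 f (df x)) ->
  (forall x, x \in `]a,b[ -> `|df x| <= C * `|f x|) ->
  (f a = 0 -> f b = 0) /\ (f b = 0 -> f a = 0).
Proof.
rewrite le_eqVlt => /orP [/eqP -> | ab] cf fd fb.
  by split.
have E k : exists2 c, c \in `]a, b[ &
   f b * f b * expR (k * b) - f a * f a * expR (k * a) =
   (2 * f c * df c + k * (f c * f c)) * expR (k * c) * (b - a).
  apply: (@MVT R (fun t => f t * f t * expR (k*t)) (fun c => (2 * f c * df c + k * (f c * f c)) * expR (k * c)) a b ab); first by move=> x /fd; exact: hderiv.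
  exact: hcont.
have sq0 (u : R) : 0 <= u * u by nra.
have sqe (u : R) : u * u = 0 -> u = 0 by move/eqP; rewrite mulf_eq0 orbb => /eqP.
split=> h0.
- have [c cab Hc] := E (- (2 * C)).
  move: Hc; rewrite h0 mul0r mul0r subr0.
  have := fdf_bound (f c) (df c) C (fb _ cab); move=> /andP [_ H2] Hc.
  have : f b * f b * expR (- (2 * C) * b) <= 0.
    rewrite Hc; apply: mulr_le0_ge0; last by rewrite subr_ge0 ltW.
    apply: mulr_le0_ge0; last exact: ltW (expR_gt0 _).
    lra.
  rewrite pmulr_lle0 ?expR_gt0 // => H3.
  apply: sqe; apply/le_anti; rewrite H3 sq0 //.
- have [c cab Hc] := E (2 * C).
  move: Hc; rewrite h0 mul0r mul0r sub0r.
  have := fdf_bound (f c) (df c) C (fb _ cab); move=> /andP [H1 _] Hc.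
  have : f a * f a * expR (2 * C * a) <= 0.
    rewrite -oppr_ge0 Hc; apply: mulr_ge0; last by rewrite subr_ge0 ltW.
    apply: mulr_ge0; last exact: ltW (expR_gt0 _).
    lra.
  rewrite pmulr_lle0 ?expR_gt0 // => H3.
  apply: sqe; apply/le_anti; rewrite H3 sq0 //.
Qed.
Lemma sum_cont (T : topologicalType) (n : nat) (g : 'I_n -> T -> R) (x : T) :
  (forall i, {for x, continuous (g i)}) ->
  {for x, continuous (fun t => \sum_(i < n) g i t)}.
Proof.
move=> gc; rewrite -fct_sumE.
elim/big_ind: _ => //.
- exact: cvg_cst.
- by move=> u v cu cv; apply: continuousD.
Qed.

Lemma sub_itv0 (t : R) : `[0, t] `<=` `[0, +oo[.
Proof.
move=> x /=; rewrite !in_itv /= => /andP [-> _] //.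
Qed.

Lemma preserve (f df : R -> R) :
  {within `[0, +oo[, continuous f} ->
  (forall t : R, 0 < t -> is_derive t 1 f (df t)) ->
  (forall T : R, 0 < T -> exists C : R, forall t : R, 0 < t < T -> `|df t| <= C * `|f t|) ->
  (f 0 = 0 -> forall t : R, 0 <= t -> f t = 0) /\
  (0 < f 0 -> forall t : R, 0 <= t -> 0 < f t).
Proof.
move=> cf fd fb.
have G (t : R) : 0 <= t -> (f 0 = 0 -> f t = 0) /\ (f t = 0 -> f 0 = 0).
  move=> t0.
  have [C HC] := fb (t + 1) ltac:(lra).
  apply: (@gron f df 0 t C t0).
  - exact: continuous_subspaceW (sub_itv0 t) cf.
  - by move=> x; rewrite in_itv /= => /andP [x0 _]; apply: fd.
  - move=> x; rewrite in_itv /= => /andP [x0 xt]; apply: HC.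
    by rewrite x0 /=; lra.
split.
  by move=> h0 t t0; apply: (G t t0).1.
move=> h0 t t0; rewrite ltNge; apply/negP => ft.
have [c c0t fc] : exists2 c, c \in `[0, t] & f c = 0.
  apply: IVT => //.
  - exact: continuous_subspaceW (sub_itv0 t) cf.
  - rewrite ge_min ft orbT /= le_max (ltW h0) //.
move: c0t; rewrite in_itv /= => /andP [c0 ct].
have := (G c c0).2 fc; lra.
Qed.
Lemma min_lip (x y r : R) : `|Num.min x r - Num.min y r| <= `|x - y|.
Proof.
have h1 := ler_norm (x - y); have h2 := ler_norm (y - x).
rewrite distrC in h2.
rewrite ler_norml.
case: (leP x r) => xr; case: (leP y r) => yr;
  rewrite ?(min_l xr) ?(min_r (ltW xr)) ?(min_l yr) ?(min_r (ltW yr)); lra.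
Qed.
Lemma phi_lip (tht : R -> R) (B L x y r : R) :
  (forall u v : R, -B <= u <= B -> -B <= v <= B -> `|tht u - tht v| <= L * `|u - v|) ->
  {homo tht : u v / u <= v} -> (forall s, 0 <= tht s) ->
  `|x| <= B -> `|y| <= B -> `|r| <= B ->
  `|theta tht x r * (x - r) - theta tht y r * (y - r)|
    <= (`|L| * (2 * B) + tht B) * `|x - y|.
Proof.
move=> Lip mono pos hx hy hr.
rewrite /theta.
have e : tht (Num.min x r) * (x - r) - tht (Num.min y r) * (y - r) =
  (tht (Num.min x r) - tht (Num.min y r)) * (x - r) + tht (Num.min y r) * (x - y)
  by ring.
rewrite e.
have /andP [hx1 hx2] : -B <= x <= B by rewrite -ler_norml.
have /andP [hy1 hy2] : -B <= y <= B by rewrite -ler_norml.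
have /andP [hr1 hr2] : -B <= r <= B by rewrite -ler_norml.
have inB u : -B <= u <= B -> -B <= Num.min u r <= B.
  move=> /andP [u1 u2]; case: (leP u r) => ur;
   rewrite ?(min_l ur) ?(min_r (ltW ur)); apply/andP; split; lra.
have hA : `|tht (Num.min x r) - tht (Num.min y r)| <= `|L| * `|x - y|.
  apply: le_trans (Lip _ _ (inB _ _) (inB _ _)) _; try (apply/andP; split; lra).
  apply: le_trans (ler_wpM2r (normr_ge0 _) (ler_norm L)) _.
  by apply: ler_wpM2l => //; exact: min_lip.
have hxr : `|x - r| <= 2 * B by rewrite ler_norml; apply/andP; split; lra.
have hT : `|tht (Num.min y r)| <= tht B.
  rewrite ger0_norm //; apply: mono.
  case: (leP y r) => yr; rewrite ?(min_l yr) ?(min_r (ltW yr)); lra.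
apply: (le_trans (ler_normD _ _)).
rewrite !normrM.
have P1 : `|tht (Num.min x r) - tht (Num.min y r)| * `|x - r| <= `|L| * `|x - y| * (2 * B).
  by apply: ler_pM.
have P2 : `|tht (Num.min y r)| * `|x - y| <= tht B * `|x - y|.
  by apply: ler_wpM2r.
have -> : (`|L| * (2 * B) + tht B) * `|x - y| = `|L| * `|x - y| * (2 * B) + tht B * `|x - y| by ring.
exact: lerD.
Qed.
Lemma sub_itv (s t : R) : 0 <= s -> `[s, t] `<=` `[0, +oo[.
Proof.
move=> s0 x /=; rewrite !in_itv /= => /andP [sx _].
by rewrite (le_trans s0 sx).
Qed.

Lemma deriv_lb (f df : R -> R) (d : R) :
  {within `[0, +oo[, continuous f} ->
  (forall t : R, 0 < t -> is_derive t 1 f (df t)) ->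
  (forall t : R, 0 < t -> d <= df t) ->
  forall s t : R, 0 <= s -> s <= t -> d * (t - s) <= f t - f s.
Proof.
move=> cf fd dl s t s0; rewrite le_eqVlt => /orP [/eqP <- | st].
  by rewrite !subrr mulr0.
have [c cst ->] := @MVT R f df s t st
  (fun x xin => fd x ltac:(move: xin; rewrite in_itv /= => /andP [h _]; lra))
  (continuous_subspaceW (@sub_itv s t s0) cf).
apply: ler_wpM2r; first by rewrite subr_ge0 ltW.
apply: dl; move: cst; rewrite in_itv /= => /andP [h _]; lra.
Qed.

Lemma antisym (tht : R -> R) (n : nat) (v : 'I_n -> R) :
  \sum_(l < n) \sum_(k < n) theta tht (v l) (v k) * (v l - v k) = 0.
Proof.
set S := (X in X = 0).
have : S = - S.
  rewrite {1}/S exchange_big /= /S -sumrN; apply: eq_bigr => l _.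
  rewrite -sumrN; apply: eq_bigr => k _.
  by rewrite /theta minC -mulrN opprB.
move=> h; have : 2 * S = 0 by rewrite mulr2n; lra.
lra.
Qed.

Lemma phi_mono (tht : R -> R) (x y a : R) :
  {homo tht : u v / u <= v} -> (forall s, 0 <= tht s) ->
  x <= a -> y <= a ->
  theta tht x y * (x - y) <= theta tht a y * (a - y).
Proof.
move=> mono pos xa ya; rewrite /theta (min_r ya).
case: (leP y x) => yx.
  apply: ler_wpM2l => //; lra.

apply: (@le_trans _ _ 0).
  by apply: mulr_ge0_le0 => //; lra.
by apply: mulr_ge0 => //; lra.
Qed.
Lemma pos_lb (n : nat) (P : pred 'I_n) (f : 'I_n -> R) :
  (forall k, P k -> 0 < f k) -> exists2 g : R, 0 < g & forall k, P k -> g <= f k.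
Proof.
move=> fp.
set Q := \sum_(k | P k) (f k)^-1.
have Q0 : 0 <= Q by apply: sumr_ge0 => k Pk; rewrite invr_ge0 ltW // fp.
exists (1 + Q)^-1; first by rewrite invr_gt0; lra.
move=> k Pk.
have : (f k)^-1 <= 1 + Q.
  rewrite /Q (bigD1 k) //=.
  have : 0 <= \sum_(i | P i && (i != k)) (f i)^-1.
    by apply: sumr_ge0 => i /andP [Pi _]; rewrite invr_ge0 ltW // fp.
  lra.
rewrite -[X in _ <= X](invrK (1 + Q)) lef_pV2 //.
all: rewrite posrE ?invr_gt0 ?fp //; lra.
Qed.

Lemma deriv0_const (f df : R -> R) :
  {within `[0, +oo[, continuous f} ->
  (forall t : R, 0 < t -> is_derive t 1 f (df t)) ->
  (forall t : R, 0 < t -> df t = 0) ->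
  forall t : R, 0 <= t -> f t = f 0.
Proof.
move=> cf fd d0 t t0.
have dl (u : R) : 0 < u -> 0 <= df u by move=> u0; rewrite d0.
have dl' (u : R) : 0 < u -> 0 <= - df u by move=> u0; rewrite d0 ?oppr0.
have h1 := @deriv_lb f df 0 cf fd dl 0 t (lexx 0) t0.
have cf' : {within `[0, +oo[, continuous (fun s => - f s)}.
  by move=> x; apply: continuousN; exact: cf x.
have fd' (u : R) : 0 < u -> is_derive u 1 (fun s => - f s) (- df u).
  by move=> u0; exact: is_deriveN (fd u u0).
have h2 := @deriv_lb (fun s => - f s) (fun s => - df s) 0 cf' fd'
  dl' 0 t (lexx 0) t0.
move: h1 h2; rewrite !mul0r => h1 h2; lra.
Qed.
End G.
Theorem theorem3p1 (R : realType) (n : nat) (kappa : R) (tht : R -> R)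
  (rho : 'I_n -> R -> R) :
  (2 <= n)%N -> 0 < kappa ->
  locally_lipschitz tht ->
  {homo tht : x y / x <= y} ->
  (forall s, 0 <= tht s) ->
  (forall s, s <= 0 -> tht s = 0) ->
  (forall s, 0 < s -> 0 < tht s) ->
  (* rho is a solution on [0, +oo): continuous on [0,+oo), differentiable
     on (0,+oo) and satisfying the ODE there *)
  (forall j, {within `[0, +oo[, continuous (rho j)}) ->
  (forall j (t : R), 0 < t ->
     is_derive t 1 (rho j)
       (kappa * \sum_(k < n) theta tht (rho j t) (rho k t) * (rho j t - rho k t))) ->
  in_simplex (fun j => rho j 0) ->
  let SM := argmax_set (fun j => rho j 0) in
  let m := #|SM| in
  (forall j, j \in SM -> rho j t @[t --> +oo] --> ((m%:R)^-1 : R)) /\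
  (forall k, k \notin SM -> rho k t @[t --> +oo] --> (0 : R)).
Proof.
move=> n2 kap0 lip mono pos zero posp cont der simp SM m.
pose F (t x : R) := kappa * \sum_(k < n) theta tht x (rho k t) * (x - rho k t).
have derF j (t : R) : 0 < t -> is_derive t 1 (rho j) (F t (rho j t)) by exact: der.
have F0 (t : R) : F t 0 = 0.
  rewrite /F big1 ?mulr0 // => k _; by rewrite /theta zero ?mul0r // ge_min lexx.
have bnd (T : R) : 0 <= T -> exists B : R, 0 <= B /\
    forall k (t : R), 0 <= t <= T -> `|rho k t| <= B.
  move=> T0.
  have : forall k, exists Bk : R, 0 <= Bk /\
      forall t : R, 0 <= t <= T -> `|rho k t| <= Bk.
    move=> k.
    have ck := continuous_subspaceW (sub_itv0 T) (cont k).
    have [c1 _ H1] := EVT_max T0 ck.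
    have [c2 _ H2] := EVT_min T0 ck.
    exists (`|rho k c1| + `|rho k c2|); split; first by rewrite addr_ge0.
    move=> t tT.
    have tin : t \in `[0, T] by rewrite in_itv.
    have := H1 t tin; have := H2 t tin.
    have := normr_ge0 (rho k c1); have := normr_ge0 (rho k c2).
    have := ler_norm (rho k c1); have := ler_norm (- rho k c2); rewrite normrN.
    move=> *; rewrite ler_norml; apply/andP; split; lra.
  case/fin_all_exists => Bf HB.
  exists (\sum_k Bf k); split; first by apply: sumr_ge0 => k _; exact: (HB k).1.
  move=> k t tT; apply: le_trans ((HB k).2 t tT) _.
  rewrite (bigD1 k) //= lerDl; apply: sumr_ge0 => i _; exact: (HB i).1.
have lipF (T : R) : 0 <= T -> exists B C : R, 0 <= B /\
    (forall k (t : R), 0 <= t <= T -> `|rho k t| <= B) /\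
    forall (t x y : R), 0 <= t <= T -> `|x| <= B -> `|y| <= B ->
      `|F t x - F t y| <= C * `|x - y|.
  move=> T0; have [B [B0 HB]] := bnd T T0.
  have [L HL] := lip (- B) B.
  exists B, (kappa * (n%:R * (`|L| * (2 * B) + tht B)));
    split => //; split => // t x y tT hx hy.
  rewrite /F -mulrBr normrM (gtr0_norm kap0) -mulrA; apply: ler_wpM2l; first exact: ltW kap0.
  rewrite -sumrB; apply: (le_trans (ler_norm_sum _ _ _)).
  apply: (@le_trans _ _ (\sum_(i < n) ((`|L| * (2 * B) + tht B) * `|x - y|))).
    apply: ler_sum => i _; apply: phi_lip => //; exact: HB.
  by rewrite sumr_const card_ord -(mulr_natl ((`|L| * (2 * B) + tht B) * `|x - y|)) mulrA.
have [sp1 sp2] := simp.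
have pair i j : (rho j 0 = rho i 0 -> forall t : R, 0 <= t -> rho j t = rho i t) /\
    (rho i 0 < rho j 0 -> forall t : R, 0 <= t -> rho i t < rho j t).
  have [P1 P2] : (rho j 0 - rho i 0 = 0 -> forall t : R, 0 <= t -> rho j t - rho i t = 0) /\
     (0 < rho j 0 - rho i 0 -> forall t : R, 0 <= t -> 0 < rho j t - rho i t).
    apply: (@preserve R (fun t => rho j t - rho i t)
      (fun t => F t (rho j t) - F t (rho i t))).
  - by move=> x; exact: (continuousB (cont j x) (cont i x)).
  - by move=> t t0; exact: is_deriveB (derF j t t0) (derF i t t0).
  - move=> T T0; have [B [C [B0 [HB HF]]]] := lipF T (ltW T0).
    exists C => t /andP [t0 tT].
    have tT' : 0 <= t <= T by rewrite (ltW t0) (ltW tT).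
    by apply: HF => //; exact: HB.
  split.
    move=> h t t0; apply/eqP; rewrite -subr_eq0; apply/eqP; apply: P1 t0.
    by rewrite h subrr.
  by move=> h t t0; rewrite -subr_gt0; apply: P2 t0; rewrite subr_gt0.
have single k : (rho k 0 = 0 -> forall t : R, 0 <= t -> rho k t = 0) /\
    (0 < rho k 0 -> forall t : R, 0 <= t -> 0 < rho k t).
  apply: (@preserve R (rho k) (fun t => F t (rho k t))).
  - exact: cont k.
  - move=> T T0; have [B [C [B0 [HB HF]]]] := lipF T (ltW T0).
    exists C => t /andP [t0 tT].
    have tT' : 0 <= t <= T by rewrite (ltW t0) (ltW tT).
    have := HF t (rho k t) 0 tT' (HB k t tT'); rewrite F0 !subr0; apply.
    by rewrite normr0.
have nneg k (t : R) : 0 <= t -> 0 <= rho k t.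
  move=> t0; have := sp1 k; rewrite le_eqVlt => /orP [/eqP h | h].
    by rewrite ((single k).1 (esym h) t t0).
  exact: ltW ((single k).2 h t t0).
have [j0 Hj0] : exists j0, forall k, rho k 0 <= rho j0 0.
  pose i0 : 'I_n := Ordinal (ltnW n2).
  case: (@arg_maxP _ _ _ i0 xpredT (fun k => rho k 0) isT) => j _ H.
  by exists j => k; apply: H.
have j0SM : j0 \in SM by rewrite inE; apply/forallP.
pose a := rho j0.
have le_a l (t : R) : 0 <= t -> rho l t <= a t.
  move=> t0; have := Hj0 l; rewrite le_eqVlt => /orP [/eqP h | h].
    by rewrite /a ((pair l j0).1 (esym h) t t0).
  exact: ltW ((pair l j0).2 h t t0).
have SMeq l (t : R) : l \in SM -> 0 <= t -> rho l t = a t.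
  rewrite inE => /forallP H t0.
  have h : rho j0 0 = rho l 0 by apply/le_anti; rewrite H Hj0.
  exact: esym ((pair l j0).1 h t t0).
have nSMlt l : l \notin SM -> rho l 0 < a 0.
  move=> lS; rewrite ltNge; move: lS; apply: contra => h.
  by rewrite inE; apply/forallP => k; exact: le_trans (Hj0 k) h.
have sum1 (t : R) : 0 <= t -> \sum_l rho l t = 1.
  move=> t0; rewrite -sp2.
  apply: (@deriv0_const R (fun s => \sum_l rho l s) (fun s => \sum_l F s (rho l s))) => //.
  - by move=> x; apply: sum_cont => i; exact: cont i x.
  - move=> u u0; have := is_derive_sum (fun i => derF i u u0).
    by rewrite fct_sumE.
  - move=> u u0; rewrite /F -mulr_sumr.
    by rewrite (antisym tht _ (fun l => rho l u)) mulr0.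
have amono (s t : R) : 0 <= s -> s <= t -> a s <= a t.
  move=> s0 st.
  have dl (u : R) : 0 < u -> 0 <= F u (a u).
    move=> u0; rewrite /F; apply: mulr_ge0; first exact: ltW kap0.
    apply: sumr_ge0 => k _; apply: mulr_ge0; first exact: pos.
    by rewrite subr_ge0; apply: le_a; exact: ltW u0.
  have := @deriv_lb R a (fun u => F u (a u)) 0 (cont j0) (fun u u0 => derF j0 u u0) dl s t s0 st.
  by rewrite mul0r subr_ge0.
have gap k (t : R) : k \notin SM -> 0 <= t -> a 0 - rho k 0 <= a t - rho k t.
  move=> kS t0.
  have cg : {within `[0, +oo[, continuous (fun u => a u - rho k u)}.
    by move=> x; exact: (continuousB (cont j0 x) (cont k x)).
  have dg (u : R) : 0 < u ->
      is_derive u 1 (fun u => a u - rho k u) (F u (a u) - F u (rho k u)).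
    by move=> u0; exact: is_deriveB (derF j0 u u0) (derF k u u0).
  have dl (u : R) : 0 < u -> 0 <= F u (a u) - F u (rho k u).
    move=> u0; rewrite /F -mulrBr; apply: mulr_ge0; first exact: ltW kap0.
    rewrite subr_ge0; apply: ler_sum => l _; apply: phi_mono => //; apply: le_a; exact: ltW u0.
  have := @deriv_lb R _ _ 0 cg dg dl 0 t (lexx 0) t0.
  by rewrite mul0r subr_ge0.
have Flb k (u : R) : 0 < u -> kappa * (tht (rho k u) * (a u - rho k u)) <= F u (a u).
  move=> u0; rewrite /F; apply: ler_wpM2l; first exact: ltW kap0.
  rewrite (bigD1 k) //= /theta (min_r (le_a k u (ltW u0))).
  rewrite lerDl; apply: sumr_ge0 => l _; apply: mulr_ge0; first exact: pos.
  by rewrite subr_ge0; apply: le_a; exact: ltW u0.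
pose S (t : R) := \sum_(k | k \notin SM) rho k t.
have Sa (t : R) : 0 <= t -> S t = 1 - m%:R * a t.
  move=> t0; have := sum1 t t0; rewrite (bigID (fun k => k \in SM)) /=.
  have -> : \sum_(i | i \in SM) rho i t = m%:R * a t.
    rewrite (eq_bigr (fun _ => a t)); last by move=> i iS; exact: SMeq.
    by rewrite sumr_const mulr_natl.
  rewrite /S; lra.
have rS k (t : R) : k \notin SM -> 0 <= t -> 0 <= rho k t <= S t.
  move=> kS t0; rewrite nneg //= /S (bigD1 k) //= lerDl.
  by apply: sumr_ge0 => i _; exact: nneg.
have S0 (t : R) : 0 <= t -> 0 <= S t.
  by move=> t0; apply: sumr_ge0 => i _; exact: nneg.
have a1 (t : R) : 0 <= t -> a t <= 1.
  move=> t0; have := sum1 t t0; rewrite (bigD1 j0) //=.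
  have : 0 <= \sum_(i < n | i != j0) rho i t by apply: sumr_ge0 => i _; exact: nneg.
  rewrite /a; lra.
have Smono (s t : R) : 0 <= s -> s <= t -> S t <= S s.
  move=> s0 st; rewrite !Sa //; last exact: le_trans st.
  have := amono s t s0 st; have : 0 <= m%:R :> R by [].
  move=> h1 h2; rewrite lerD2l lerN2; exact: ler_wpM2l.
have Ssmall (e : R) : 0 < e -> exists T : R, 0 <= T /\ forall t : R, T <= t -> S t <= e.
  move=> e0.
  have [g g0 Hg] := @pos_lb R n (fun k => k \notin SM) (fun k => a 0 - rho k 0)
    (fun k kS => ltac:(by rewrite subr_gt0; exact: nSMlt)).
  case: (pselect (exists T : R, 0 <= T /\ S T <= e)) => [[T [T0 HT]] | nE].
    exists T; split => // t Tt; apply: le_trans HT; exact: Smono.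
  exfalso.
  have n0 : 0 < n%:R :> R by rewrite ltr0n (ltnW n2).
  pose eta := e / n%:R.
  have eta0 : 0 < eta by rewrite divr_gt0.
  have key (u : R) : 0 < u -> kappa * (tht eta * g) <= F u (a u).
    move=> u0.
    have [k /andP [kS hk]] : exists k, (k \notin SM) && (eta < rho k u).
      apply/existsP; apply: contraT; rewrite negb_exists => /forallP H.
      apply/negP => _; apply: nE; exists u; split; first exact: ltW.
      rewrite /S; apply: (@le_trans _ _ (\sum_(k < n | k \notin SM) eta)).
        apply: ler_sum => k kS; have := H k; rewrite kS /= -leNgt; exact.
      apply: (@le_trans _ _ (\sum_(k < n) eta)).
        rewrite [X in _ <= X](bigID (fun k => k \notin SM)) /= lerDl.
        by apply: sumr_ge0 => i _; exact: ltW.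
      by rewrite sumr_const card_ord -mulr_natr /eta mulfVK // gt_eqF.
    apply: le_trans (Flb k u u0).
    apply: ler_wpM2l; first exact: ltW kap0.
    apply: ler_pM => //; first exact: ltW g0.
      by apply: mono; exact: ltW hk.
    exact: le_trans (Hg k kS) (gap k u kS (ltW u0)).
  pose d := kappa * (tht eta * g).
  have d0 : 0 < d by rewrite /d !mulr_gt0 // posp.
  have t0 : 0 <= 2 / d by rewrite divr_ge0 // ltW.
  have := @deriv_lb R a (fun u => F u (a u)) d (cont j0) (fun u u0 => derF j0 u u0) key 0 (2 / d) (lexx 0) t0.
  rewrite subr0 mulrCA divff ?gt_eqF // mulr1.
  have := a1 _ t0; have := nneg j0 0 (lexx 0); rewrite /a; lra.
split.
- move=> j jS; apply/cvgrPdist_le => e e0.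
  have [T [T0 HT]] := Ssmall e e0.
  exists T; split; first exact: num_real.
  move=> t Tt; have t0 : 0 <= t by apply: le_trans T0 (ltW Tt).
  rewrite SMeq //.
  have m1 : 1 <= m%:R :> R.
    rewrite ler1n; apply/card_gt0P; by exists j.
  have e1 : m%:R^-1 - a t = S t / m%:R.
    rewrite Sa //; field; rewrite gt_eqF //; lra.
  rewrite e1 ger0_norm; last by rewrite divr_ge0 // S0.
  have hinv : 0 < (m%:R : R)^-1 <= 1.
    have mpos : 0 < (m%:R : R) by apply: lt_le_trans ltr01 m1.
    by rewrite invr_gt0 mpos /= invf_le1.
  have := HT t (ltW Tt); have := S0 t t0; move: hinv => /andP [h1 h2].
  move=> *; nra.
- move=> k kS; apply/cvgrPdist_le => e e0.
  have [T [T0 HT]] := Ssmall e e0.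
  exists T; split; first exact: num_real.
  move=> t Tt; have t0 : 0 <= t by apply: le_trans T0 (ltW Tt).
  rewrite sub0r normrN ger0_norm ?nneg //.
  have /andP [_ h] := rS k t kS t0.
  exact: le_trans h (HT t (ltW Tt)).
Qed.
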